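(* Let $V$ be a finite-dimensional real vector space with a non-degenerate inner product of signature $(p,q)$, $p,q\ge 1$, $p+q\ge 3$; let $Q(v)=(v,v)$, $\mathcal{N}=\{v:Q(v)=0\}$, and $\mathcal{I}=Q\cdot\mathbb{R}[V,\mathbb{R}]$. Let $W$ be a finite-dimensional real vector space of dimension $w$ and let $x_1,\dots,x_r\in\mathbb{R}[V,W]$ with $r\le w$. The following are equivalent: \begin{enumerate} \item the vectors $x_1(v),\dots,x_r(v)$ are linearly dependent for all $v\in\mathcal{N}$; \item $I(x_1,\dots,x_r)\subset\mathcal{I}$; \item there exist $c_1,\dots,c_r\in\mathbb{R}[V,\mathbb{R}]$, with $c_i\notin\mathcal{I}$ for at least one $i$, such that $c_1x_1+\dots+c_rx_r\in\mathcal{I}\,\mathbb{R}[V,W]$, i.e. $c_1x_1+\dots+c_rx_r=Q\cdot y$ for some $y\in\mathbb{R}[V,W]$. \end{enumerate}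
   Context: $\mathbb{R}[V,\mathbb{R}]$ is the ring of real polynomial functions on $V$ and $\mathbb{R}[V,W]$ the $\mathbb{R}[V,\mathbb{R}]$-module of polynomial maps $V\to W$. For a basis of $W$, let $\mathbf{X}$ be the $w\times r$ matrix over $\mathbb{R}[V,\mathbb{R}]$ whose $i$-th column is the coordinate vector of $x_i$; $I(x_1,\dots,x_r)$ is the ideal generated by all $r\times r$ minors of $\mathbf{X}$ (independent of the basis). *)

(* Defs.v *)
From HB Require Import structures.
From mathcomp Require Import all_boot all_order all_algebra.
From mathcomp Require Import reals.
From mathcomp Require Import mpoly.
Set Implicit Arguments. Unset Strict Implicit. Unset Printing Implicit Defensive.
Import Order.TTheory GRing.Theory Num.Theory.
Local Open Scope ring_scope.

(* V = R^n (coordinates); a symmetric matrix A represents the inner product. *)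

(* Nondegenerate symmetric form of signature (p,q): Sylvester normal form. *)
Definition has_signature (R : realType) (n : nat) (A : 'M[R]_n) (p q : nat) : Prop :=
  A^T = A /\ (p + q = n)%N /\
  exists P : 'M[R]_n, P \in unitmx /\
    P^T *m A *m P = diag_mx (\row_(i < n) (if (i < p)%N then 1 else -1)).

Definition Qpoly (R : realType) (n : nat) (A : 'M[R]_n) : {mpoly R[n]} :=
  \sum_(i < n) \sum_(j < n) (A i j) *: ('X_i * 'X_j).

Definition in_Qideal (R : realType) (n : nat) (Q : {mpoly R[n]}) (f : {mpoly R[n]}) : Prop :=
  exists g : {mpoly R[n]}, f = Q * g.

(* The ideal I(x_1,...,x_r) generated by all r x r minors of the w x r matrix X. *)
Definition in_minor_ideal (R : realType) (n w r : nat)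
  (X : 'M[{mpoly R[n]}]_(w, r)) (f : {mpoly R[n]}) : Prop :=
  exists a : {ffun 'I_r -> 'I_w} -> {mpoly R[n]},
    f = \sum_(s : {ffun 'I_r -> 'I_w} | injectiveb s) a s * \det (rowsub s X).

(* Main.v *)
Require Import Defs.
From HB Require Import structures.
From mathcomp Require Import all_boot all_order all_algebra.
From mathcomp Require Import reals.
From mathcomp Require Import mpoly.
Import Order.TTheory GRing.Theory Num.Theory.
Local Open Scope ring_scope.
From mathcomp Require Import ring lra.
From mathcomp Require Import perm.
From Stdlib Require Import Classical.
Section Zero.
Variable R : realType.

Lemma poly_box0 (p : {poly R}) (a b : R) : a < b ->
  (forall t, a < t < b -> p.[t] = 0) -> p = 0.
Proof.
move=> ab H; apply/eqP; apply/negPn/negP => p0.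
pose pt (k : nat) : R := a + (b - a) / (k.+2)%:R.
have ptin k : a < pt k < b.
  have k0 : (0 : R) < (k.+2)%:R by rewrite ltr0n.
  have e0 : (0 : R) < (k.+2)%:R^-1 by rewrite invr_gt0.
  have e1 : (k.+2)%:R^-1 < (1 : R) by rewrite invf_lt1 // ltr1n.
  rewrite /pt; set e := _^-1 in e0 e1 *; apply/andP; split; nra.
have inj : injective pt.
  have ba : b - a != 0 by rewrite subr_eq0 (gt_eqF ab).
  move=> k l; rewrite /pt => /addrI /(mulfI ba) /invr_inj /eqP.
  by rewrite eqr_nat !eqSS => /eqP.
suff : (size (map pt (iota 0 (size p))) < size p)%N.
  by rewrite size_map size_iota ltnn.
apply: max_poly_roots p0 _ _.
  by apply/allP => x /mapP [k _ ->]; rewrite /root H.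
by rewrite map_inj_uniq // iota_uniq.
Qed.


Definition mtrunc {n} (m : 'X_{1..n.+1}) : 'X_{1..n} :=
  [multinom m (widen_ord (leqnSn n) i) | i < n].

Lemma muni_coef n (p : {mpoly R[n.+1]}) k m' :
  ((muni p)`_k)@_m' =
  \sum_(m <- msupp p | (m ord_max == k) && (mtrunc m == m')) p@_m.
Proof.
rewrite muniE coef_sum raddf_sum /= [RHS]big_mkcond /=; apply: eq_bigr => m _.
rewrite -mul_polyC coefCM coefXn eq_sym.
case: (m ord_max == k); rewrite /= ?mulr0 ?mulr1 ?mcoeff0 //.
by rewrite mcoeffZ mcoeffX; case: (_ == m'); rewrite ?mulr1 ?mulr0.
Qed.


Lemma muni_inj0 n (p : {mpoly R[n.+1]}) : muni p = 0 -> p = 0.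
Proof.
move=> h; apply/mpolyP => m0; rewrite mcoeff0.
have := @muni_coef n p (m0 ord_max) (mtrunc m0); rewrite h coef0 mcoeff0.
rewrite (eq_bigl (fun m => m == m0)); last first.
  move=> m; apply/andP/eqP => [[/eqP e1 /eqP e2]|-> //].
  apply/mnmP => i; case: (unliftP ord_max i) => [j ->|->] //.
  have := congr1 (fun t : 'X_{1..n} => t j) e2; rewrite /mtrunc /= !mnmE.
  have -> // : widen_ord (leqnSn n) j = lift ord_max j.
  by apply: val_inj; rewrite /= /bump leqNgt ltn_ord.
case: (boolP (m0 \in msupp p)) => [hm|hm]; last by rewrite memN_msupp_eq0.
by rewrite -big_filter filter_pred1_uniq ?msupp_uniq // big_seq1 => ->.
Qed.


Lemma muni_meval n (p : {mpoly R[n.+1]}) (v : 'I_n.+1 -> R) :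
  p.@[v] = (map_poly (meval (fun i : 'I_n => v (widen_ord (leqnSn n) i))) (muni p)).[v ord_max].
Proof.
rewrite mevalE muniE rmorph_sum horner_sum; apply: eq_bigr => m _.
rewrite -mul_polyC rmorphM /= map_polyC map_polyXn hornerCM hornerXn.
rewrite -mul_mpolyC.
rewrite (_ : forall x : {mpoly R[n]}, mpoly_meval__canonical__Algebra_Additive (fun i : 'I_n => v (widen_ord (leqnSn n) i)) x = meval (fun i : 'I_n => v (widen_ord (leqnSn n) i)) x) //.
rewrite mevalM mevalC mevalX big_ord_recr /= mulrA.
congr (_ * _ * _); apply: eq_bigr => i _; by rewrite mnmE.
Qed.


Definition inbox {n} (a b v : 'I_n -> R) := forall i, a i < v i < b i.

Lemma box0 n (f : {mpoly R[n]}) (a b : 'I_n -> R) :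
  (forall i, a i < b i) -> (forall v, inbox a b v -> f.@[v] = 0) -> f = 0.
Proof.
elim: n f a b => [|n IH] f a b ab H.
  have h0 : inbox a b (fun _ => 0) by case.
  move: (H _ h0); rewrite {1}(nvar0_mpolyC f) mevalC => h.
  by rewrite (nvar0_mpolyC f) h.
apply: muni_inj0; apply/polyP => k; rewrite coef0.
pose a' := fun i : 'I_n => a (widen_ord (leqnSn n) i).
pose b' := fun i : 'I_n => b (widen_ord (leqnSn n) i).
apply: (IH _ a' b') => [i|v' hv']; first exact: ab.
pose ext (t : R) : 'I_n.+1 -> R := fun i => oapp v' t (insub (val i)).
have e1 t i : ext t (widen_ord (leqnSn n) i) = v' i.
  rewrite /ext insubT /= ?ltn_ord // => ?; congr (v' _); exact: val_inj.
have e2 t : ext t ord_max = t.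
  by rewrite /ext insubF //= ltnn.
have u0 : map_poly (meval v') (muni f) = 0.
  apply: (@poly_box0 _ _ _ (ab ord_max)) => t ht.
  have := H (ext t); rewrite muni_meval e2.
  rewrite (eq_map_poly (g := meval v')) => [-> //|x]; last exact: meval_eq.
  move=> i; case: (unliftP ord_max i) => [j ->|->]; last by rewrite e2.
  have -> : lift ord_max j = widen_ord (leqnSn n) j.
    by apply: val_inj; rewrite /= /bump leqNgt ltn_ord.
  rewrite e1; exact: hv'.
have := congr1 (fun u : {poly R} => u`_k) u0.
by rewrite coef_map coef0.
Qed.


Lemma mpoly_eval_eq n (f g : {mpoly R[n]}) : (forall v, f.@[v] = g.@[v]) -> f = g.
Proof.
move=> H; apply/eqP; rewrite -subr_eq0; apply/eqP.
apply: (@box0 n _ (fun _ => 0) (fun _ => 1)) => [i|v _]; first exact: ltr01.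
by rewrite mevalB H subrr.
Qed.

Lemma meval_sum n (I : Type) (r : seq I) (P : pred I) (F : I -> {mpoly R[n]}) v :
  (\sum_(i <- r | P i) F i).@[v] = \sum_(i <- r | P i) (F i).@[v].
Proof. exact: raddf_sum. Qed.

Lemma meval_prod n (I : Type) (r : seq I) (P : pred I) (F : I -> {mpoly R[n]}) v :
  (\prod_(i <- r | P i) F i).@[v] = \prod_(i <- r | P i) (F i).@[v].
Proof. exact: rmorph_prod. Qed.

Lemma mevalXn n (v : 'I_n -> R) (p : {mpoly R[n]}) k : (p ^+ k).@[v] = p.@[v] ^+ k.
Proof. exact: rmorphXn. Qed.

End Zero.

Section Diag.
Variable R : realType.
Variable n : nat.
Variable s : 'I_n -> R.
Variable i0 : 'I_n.
Hypothesis s_sign : forall i, s i = 1 \/ s i = -1.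
Hypothesis s_i0 : s i0 = 1.

Definition upd (v : 'I_n -> R) (x : R) : 'I_n -> R :=
  fun i => if i == i0 then x else v i.
Definition indep (h : {mpoly R[n]}) := forall v x, h.@[upd v x] = h.@[v].
Definition Tp : {mpoly R[n]} := \sum_(i | i != i0) (- s i) *: 'X_i ^+ 2.
Definition Dq : {mpoly R[n]} := 'X_i0 ^+ 2 - Tp.

Lemma Tp_eval v : Tp.@[v] = \sum_(i | i != i0) (- s i) * v i ^+ 2.
Proof.
rewrite /Tp meval_sum; apply: eq_bigr => i _.
by rewrite mevalZ mevalXn mevalXU.
Qed.

Lemma Dq_eval v : Dq.@[v] = v i0 ^+ 2 - Tp.@[v].
Proof. by rewrite /Dq mevalB mevalXn mevalXU. Qed.

Lemma upd_i0 v x : upd v x i0 = x.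
Proof. by rewrite /upd eqxx. Qed.

Lemma indep_Tp : indep Tp.
Proof.
move=> v x; rewrite !Tp_eval; apply: eq_bigr => i /negbTE hi.
by rewrite /upd hi.
Qed.

Lemma indepD f g : indep f -> indep g -> indep (f + g).
Proof. by move=> hf hg v x; rewrite !mevalD hf hg. Qed.
Lemma indepM f g : indep f -> indep g -> indep (f * g).
Proof. by move=> hf hg v x; rewrite !mevalM hf hg. Qed.
Lemma indepZ c f : indep f -> indep (c *: f).
Proof. by move=> hf v x; rewrite !mevalZ hf. Qed.
Lemma indep0 : indep 0.
Proof. by move=> v x; rewrite !meval0. Qed.
Lemma indepX i : i != i0 -> indep 'X_i.
Proof. by move=> /negbTE hi v x; rewrite !mevalXU /upd hi. Qed.

Definition decomp (f : {mpoly R[n]}) :=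
  exists g h0 h1, [/\ indep h0, indep h1 & f = Dq * g + h0 + 'X_i0 * h1].

Lemma decompX i f : decomp f -> decomp ('X_i * f).
Proof.
case=> g [h0] [h1] [i0h i1h ->].
case: (eqVneq i i0) => [->|hi].
  exists ('X_i0 * g + h1), (Tp * h1), h0; split => //.
    by apply: indepM => //; exact: indep_Tp.
  rewrite /Dq; ring.
exists ('X_i * g), ('X_i * h0), ('X_i * h1); split.
- by apply: indepM => //; exact: indepX.
- by apply: indepM => //; exact: indepX.
- ring.
Qed.

Lemma decompD f g : decomp f -> decomp g -> decomp (f + g).
Proof.
case=> g1 [a0] [a1] [ha0 ha1 ->]; case=> g2 [b0] [b1] [hb0 hb1 ->].
exists (g1 + g2), (a0 + b0), (a1 + b1); split; try by apply: indepD.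
ring.
Qed.

Lemma decompZ c f : decomp f -> decomp (c *: f).
Proof.
case=> g1 [a0] [a1] [ha0 ha1 ->].
exists (c *: g1), (c *: a0), (c *: a1); split; try by apply: indepZ.
by rewrite !scalerDr scalerAr [c *: ('X_i0 * _)]scalerAr.
Qed.

Lemma decomp1 : decomp 1.
Proof.
exists 0, 1, 0; split; [|exact: indep0|by rewrite !mulr0 add0r addr0].
by move=> v x; rewrite !meval1.
Qed.

Lemma decomp_all f : decomp f.
Proof.
elim/mpolyind: f => [|c m p _ _ hp].
  exists 0, 0, 0; split; try exact: indep0; by rewrite !mulr0 !addr0.
apply: decompD hp; apply: decompZ.
rewrite mpolyXE_id; elim/big_rec: _ => [|i x _ hx]; first exact: decomp1.
elim: (m i) => [|k IH]; first by rewrite expr0 mul1r.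
by rewrite exprS -mulrA; apply: decompX.
Qed.


Definition boxa (k : 'I_n) : 'I_n -> R := fun i => if i == k then n%:R else 0.
Definition boxb (k : 'I_n) : 'I_n -> R := fun i => if i == k then n%:R + 1 else 1.

Lemma boxab k i : boxa k i < boxb k i.
Proof. by rewrite /boxa /boxb; case: (i == k); rewrite ?ltrDl ?ltr01. Qed.

Lemma sign_box k v : k != i0 -> inbox R (boxa k) (boxb k) v ->
  0 < s k * \sum_(i | i != i0) s i * v i ^+ 2.
Proof.
move=> ki0 hv.
rewrite (bigD1 k) //=.
set rest := \sum_(i | _) _.
have n1 : (1 : R) <= n%:R by rewrite ler1n (leq_ltn_trans (leq0n _) (ltn_ord k)).
have hk : n%:R < v k by have := hv k; rewrite /boxa /boxb eqxx => /andP[].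
have hr : `|rest| <= n%:R.
  apply: le_trans (ler_norm_sum _ _ _) _.
  rewrite big_mkcond /= (_ : n%:R = \sum_(i < n) (1:R)); last by rewrite sumr_const card_ord.
  apply: ler_sum => i _; case: ifP => [/andP[_ hik]|_]; last by rewrite ?normr0 ler01.
  have := hv i; rewrite /boxa /boxb (negbTE hik) => /andP[h0 h1].
  rewrite normrM; case: (s_sign i) => ->; rewrite ?normrN normr1 mul1r ger0_norm;
    try (by rewrite exprn_ge0 // ltW); nra.
move: hr; rewrite ler_norml => /andP[hr1 hr2].
case: (s_sign k) => ->; nra.
Qed.

Lemma Tp_evalN v : Tp.@[v] = - \sum_(i | i != i0) s i * v i ^+ 2.
Proof. by rewrite Tp_eval -sumrN; apply: eq_bigr => i _; rewrite mulNr. Qed.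

Lemma coreC k h0 h1 : k != i0 -> s k = -1 -> indep h0 -> indep h1 ->
  (forall v, Dq.@[v] = 0 -> h0.@[v] + v i0 * h1.@[v] = 0) -> h0 = 0 /\ h1 = 0.
Proof.
move=> ki0 sk ih0 ih1 H.
have key v : inbox R (boxa k) (boxb k) v -> h0.@[v] = 0 /\ h1.@[v] = 0.
  move=> hv; have := @sign_box k v ki0 hv; rewrite sk mulN1r -Tp_evalN => tp.
  set t := Tp.@[v] in tp.
  have r0 : 0 < Num.sqrt t by rewrite sqrtr_gt0.
  have r2 : Num.sqrt t ^+ 2 = t by rewrite sqr_sqrtr // ltW.
  have E x : x ^+ 2 = t -> h0.@[v] + x * h1.@[v] = 0.
    move=> hx; have := H (upd v x); rewrite Dq_eval upd_i0 indep_Tp hx -/t subrr.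
    by rewrite ih0 ih1 => ->.
  have e1 := E _ r2.
  have e2 : h0.@[v] + (- Num.sqrt t) * h1.@[v] = 0 by apply: E; rewrite sqrrN.
  have : Num.sqrt t * h1.@[v] = 0 by lra.
  move/eqP; rewrite mulf_eq0 (gt_eqF r0) /= => /eqP h1v; split => //.
  by move: e1; rewrite h1v mulr0 addr0.
split; apply: (@box0 R n _ _ _ (boxab k)) => v hv; by case: (key v hv).
Qed.

Lemma DF1 k f : k != i0 -> s k = -1 ->
  (forall v, Dq.@[v] = 0 -> f.@[v] = 0) -> exists g, f = Dq * g.
Proof.
move=> ki0 sk H; have [g [h0 [h1 [ih0 ih1 ef]]]] := decomp_all f.
have [] := @coreC k h0 h1 ki0 sk ih0 ih1.
  move=> v hv; have := H v hv; rewrite ef !mevalD !mevalM hv mul0r add0r mevalXU.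
  by [].
by move=> z0 z1; exists g; rewrite ef z0 z1 mulr0 !addr0.
Qed.

Lemma DF2 k j a b : k != i0 -> s k = -1 -> j != i0 -> s j = 1 ->
  (exists g, a * b = Dq * g) -> ~ (exists g, a = Dq * g) -> exists g, b = Dq * g.
Proof.
move=> ki0 sk ji0 sj [g eab] na.
have [ga [a0 [a1 [ia0 ia1 ea]]]] := decomp_all a.
have [gb [b0 [b1 [ib0 ib1 eb]]]] := decomp_all b.
have [] := @coreC k (a0 * b0 + Tp * (a1 * b1)) (a0 * b1 + a1 * b0) ki0 sk.
- apply: indepD; apply: indepM => //; [exact: indep_Tp|exact: indepM].
- by apply: indepD; apply: indepM.
- move=> v hv.
  have hT : Tp.@[v] = v i0 ^+ 2 by move: hv; rewrite Dq_eval => /eqP; rewrite subr_eq0 => /eqP.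
  have := congr1 (meval v) eab; rewrite !mevalM hv mul0r ea eb.
  rewrite !mevalD !mevalM hv !mul0r !add0r mevalXU hT => <-; ring.
move=> z0 z1.
have key : b1 * (a0 ^+ 2 - Tp * a1 ^+ 2) = 0.
  have -> : b1 * (a0 ^+ 2 - Tp * a1 ^+ 2) =
    a0 * (a0 * b1 + a1 * b0) - a1 * (a0 * b0 + Tp * (a1 * b1)) by ring.
  by rewrite z0 z1 !mulr0 subrr.
move/eqP: key; rewrite mulf_eq0 => /orP[/eqP b10|/eqP q0].
  move: z0 z1; rewrite b10 !mulr0 addr0 add0r => /eqP; rewrite mulf_eq0 => /orP[/eqP a00|/eqP b00].
    move=> /eqP; rewrite mulf_eq0 => /orP[/eqP a10|/eqP b00].
      by case: na; exists ga; rewrite ea a00 a10 mulr0 !addr0.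
    by exists gb; rewrite eb b00 b10 mulr0 !addr0.
  by move=> _; exists gb; rewrite eb b00 b10 mulr0 !addr0.
have key v : inbox R (boxa j) (boxb j) v -> a0.@[v] = 0 /\ a1.@[v] = 0.
  move=> hv; have := @sign_box j v ji0 hv; rewrite sj mul1r => tn.
  have tn' : Tp.@[v] < 0 by rewrite Tp_evalN oppr_lt0.
  have := congr1 (meval v) q0; rewrite mevalB !mevalM meval0 => e.
  have s0 : 0 <= a0.@[v] * a0.@[v] by rewrite -expr2 sqr_ge0.
  have s1 : 0 <= a1.@[v] * a1.@[v] by rewrite -expr2 sqr_ge0.
  have z : Tp.@[v] * (a1.@[v] * a1.@[v]) = 0.
    by apply/eqP; rewrite eq_le; apply/andP; split; nra.
  have h1 : a1.@[v] = 0.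
    move/eqP: z; rewrite mulf_eq0 (lt_eqF tn') /= mulf_eq0 orbb.
    by move/eqP.
  split => //; move: e; rewrite h1 !mulr0 subr0 => /eqP; rewrite mulf_eq0 orbb.
  by move/eqP.
have a00 : a0 = 0 by apply: (@box0 R n _ _ _ (boxab j)) => v hv; case: (key v hv).
have a10 : a1 = 0 by apply: (@box0 R n _ _ _ (boxab j)) => v hv; case: (key v hv).
by case: na; exists ga; rewrite ea a00 a10 mulr0 !addr0.
Qed.

End Diag.

Section Transfer.
Variable R : realType.
Variable n : nat.

Definition lin (P : 'M[R]_n) : n.-tuple {mpoly R[n]} :=
  [tuple \sum_j P i j *: 'X_j | i < n].
Definition pb (P : 'M[R]_n) (f : {mpoly R[n]}) := f \mPo lin P.
Definition mv (P : 'M[R]_n) (v : 'I_n -> R) := fun i => \sum_j P i j * v j.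

Lemma pb_eval P f v : (pb P f).@[v] = f.@[mv P v].
Proof.
rewrite /pb comp_mpoly_meval; apply: meval_eq => i.
rewrite tnth_mktuple meval_sum; apply: eq_bigr => j _.
by rewrite mevalZ mevalXU.
Qed.

Lemma mv_mul P P' v i : mv P (mv P' v) i = mv (P *m P') v i.
Proof.
rewrite /mv; under eq_bigr do rewrite big_distrr /=.
rewrite exchange_big /=; apply: eq_bigr => j _.
rewrite mxE big_distrl /=; apply: eq_bigr => k _; by rewrite mulrA.
Qed.

Lemma mv1 v i : mv 1%:M v i = v i.
Proof.
rewrite /mv (bigD1 i) //= big1 ?addr0 => [|j /negbTE ji]; first by rewrite mxE eqxx mul1r.
by rewrite mxE eq_sym ji mul0r.
Qed.

Definition quad (M : 'M[R]_n) (v : 'I_n -> R) := \sum_i \sum_j M i j * (v i * v j).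

Lemma Qpoly_eval M v : (Qpoly M).@[v] = quad M v.
Proof.
rewrite /Qpoly meval_sum; apply: eq_bigr => i _; rewrite meval_sum; apply: eq_bigr => j _.
by rewrite mevalZ mevalM !mevalXU.
Qed.

Lemma quadE M v : quad M v = ((\col_i v i)^T *m M *m (\col_i v i)) 0 0.
Proof.
rewrite /quad mxE exchange_big /=; apply: eq_bigr => j _.
rewrite !mxE big_distrl /=; apply: eq_bigr => i _.
by rewrite !mxE; ring.
Qed.

Lemma quad_mv M P v : quad M (mv P v) = quad (P^T *m M *m P) v.
Proof.
rewrite !quadE.
have -> : (\col_i mv P v i) = P *m (\col_i v i).
  by apply/matrixP => i k; rewrite !mxE /mv; apply: eq_bigr => j _; rewrite mxE.
by rewrite trmx_mul !mulmxA.
Qed.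

Lemma quad_diag (d : 'I_n -> R) v :
  quad (diag_mx (\row_i d i)) v = \sum_i d i * v i ^+ 2.
Proof.
rewrite /quad; apply: eq_bigr => i _.
rewrite (bigD1 i) //= big1 ?addr0 => [|j /negbTE ji].
  by rewrite !mxE eqxx mulr1n expr2.
by rewrite !mxE eq_sym ji mulr0n mul0r.
Qed.

End Transfer.
Arguments lin {R n}. Arguments pb {R n}. Arguments mv {R n}. Arguments quad {R n}.
Arguments pb_eval {R n}. Arguments mv_mul {R n}. Arguments mv1 {R n}.
Arguments Qpoly_eval {R n}. Arguments quadE {R n}. Arguments quad_mv {R n}.
Arguments quad_diag {R n}.
Arguments mpoly_eval_eq {R n}.

Section Geom.
Variable R : realType.
Variable n : nat.

Lemma Dq_sum (s : 'I_n -> R) i0 w : s i0 = 1 ->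
  (Dq R n s i0).@[w] = \sum_i s i * w i ^+ 2.
Proof.
move=> si0; rewrite Dq_eval Tp_evalN opprK [RHS](bigD1 i0) //= si0 mul1r.
by congr (_ + _); apply: eq_bigl.
Qed.

Lemma geomB (B P : 'M[R]_n) (s : 'I_n -> R) (i0 k j : 'I_n) :
  P \in unitmx -> P^T *m B *m P = diag_mx (\row_i s i) ->
  (forall i, s i = 1 \/ s i = -1) -> s i0 = 1 -> k != i0 -> s k = -1 ->
  j != i0 -> s j = 1 ->
  (forall f, (forall v, (Qpoly B).@[v] = 0 -> f.@[v] = 0) -> in_Qideal (Qpoly B) f) /\
  (forall a b, in_Qideal (Qpoly B) (a * b) -> ~ in_Qideal (Qpoly B) a ->
     in_Qideal (Qpoly B) b).
Proof.
move=> Pu hB ss si0 ki0 sk ji0 sj.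
set D := Dq R n s i0.
have QBmv w : (Qpoly B).@[mv P w] = D.@[w].
  by rewrite Qpoly_eval quad_mv hB quad_diag Dq_sum.
have mvK v i : mv P (mv (invmx P) v) i = v i.
  by rewrite mv_mul mulmxV // mv1.
have back f g : pb P f = D * g -> f = Qpoly B * pb (invmx P) g.
  move=> e; apply: mpoly_eval_eq => v.
  rewrite (meval_eq f (v2 := mv P (mv (invmx P) v))) => [|i]; last by rewrite mvK.
  rewrite -pb_eval e mevalM -QBmv mevalM !pb_eval.
  by congr (_ * _); apply: meval_eq.
split.
  move=> f H.
  have [g eg] : exists g, pb P f = D * g.
    apply: (@DF1 R n s i0 ss k) => // w hw.
    by rewrite pb_eval; apply: H; rewrite QBmv.
  by exists (pb (invmx P) g); apply: back.
move=> a b [h eh] na.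
have [g eg] : exists g, pb P b = D * g.
  apply: (@DF2 R n s i0 ss k j (pb P a)) => //.
    exists (pb P h); apply: mpoly_eval_eq => w.
    by rewrite !mevalM !pb_eval -mevalM eh mevalM QBmv.
  by move=> [g eg]; apply: na; exists (pb (invmx P) g); apply: back.
by exists (pb (invmx P) g); apply: back.
Qed.


Definition GF (Q : {mpoly R[n]}) :=
  (forall f, (forall v, Q.@[v] = 0 -> f.@[v] = 0) -> in_Qideal Q f) /\
  (forall a b, in_Qideal Q (a * b) -> ~ in_Qideal Q a -> in_Qideal Q b).

Lemma GFN Q : GF (- Q) -> GF Q.
Proof.
have E f : in_Qideal (- Q) f <-> in_Qideal Q f.
  by split=> [[g ->]|[g ->]]; exists (- g); rewrite ?mulrNN // mulNr mulrN.
move=> [h1 h2]; split.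
  move=> f H; apply/E; apply: h1 => v; rewrite mevalN => /eqP; rewrite oppr_eq0 => /eqP.
  exact: H.
by move=> a b /E hab na; apply/E; apply: h2 hab _ => /E.
Qed.

Lemma QpolyN (A : 'M[R]_n) : Qpoly (- A) = - Qpoly A.
Proof.
rewrite /Qpoly -sumrN; apply: eq_bigr => i _; rewrite -sumrN; apply: eq_bigr => j _.
by rewrite mxE scaleNr.
Qed.

Lemma geomA (A : 'M[R]_n) p q : has_signature A p q -> (1 <= p)%N -> (1 <= q)%N ->
  (3 <= p + q)%N -> GF (Qpoly A).
Proof.
move=> [_ [pqn [P [Pu hP]]]] p1 q1 n3.
have n3' : (3 <= n)%N by rewrite -pqn.
have s_sign (p' : nat) (c : R) : c = 1 \/ c = -1 ->
   forall i : 'I_n, (if (i < p')%N then c else - c) = 1 \/ (if (i < p')%N then c else - c) = -1.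
  by move=> [->|->] i; case: ifP => _; rewrite ?opprK; [left|right|right|left].
case: (ltnP 1 p) => p2.
  have h0 : (0 < n)%N by apply: leq_trans n3'.
  have h1 : (1 < n)%N by apply: leq_trans n3'.
  have hp : (p < n)%N by rewrite -pqn -{1}(addn0 p) ltn_add2l.
  have := @geomB A P (fun i : 'I_n => if (i < p)%N then 1 else -1)
     (Ordinal h0) (Ordinal hp) (Ordinal h1) Pu.
  case; first by rewrite hP; congr diag_mx; apply/matrixP => a b; rewrite !mxE.
  - by apply: (s_sign p 1); left.
  - by rewrite /= (leq_trans _ p1).
  - by rewrite -val_eqE /= -lt0n (leq_trans _ p1).
  - by rewrite /= ltnn.
  - by rewrite -val_eqE.
  - by rewrite /= p2.
  by move=> H1 H2; split.
have p1' : p = 1%N by apply/eqP; rewrite eqn_leq p2 p1.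
apply: GFN; rewrite -QpolyN.
have h0 : (0 < n)%N by apply: leq_trans n3'.
have h1 : (1 < n)%N by apply: leq_trans n3'.
have h2 : (2 < n)%N by apply: leq_trans n3'.
have := @geomB (- A) P (fun i : 'I_n => if (i < p)%N then -1 else - - 1)
   (Ordinal h1) (Ordinal h0) (Ordinal h2) Pu.
case.
- rewrite mulmxN mulNmx hP; apply/matrixP => a b; rewrite !mxE.
  by case: (a == b); case: ifP; rewrite ?mulr1n ?mulr0n ?opprK ?oppr0.
- by apply: (s_sign p (-1)); right.
- by rewrite /= p1' ltnn opprK.
- by rewrite -val_eqE.
- by rewrite /= p1'.
- by rewrite -val_eqE.
- by rewrite /= p1' opprK.
by move=> H1 H2; split.
Qed.

End Geom.
Section Main.
Variable R : realType.
Variables n w r : nat.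
Variable X : 'M[{mpoly R[n]}]_(w, r).
Variable Q : {mpoly R[n]}.
Hypothesis hGF : GF R n Q.
Hypothesis Q0 : Q.@[fun _ => 0] = 0.

Definition Cond1 := forall v : 'I_n -> R, Q.@[v] = 0 ->
  exists c : 'I_r -> R, (exists i, c i != 0) /\
    forall k : 'I_w, \sum_(i < r) c i * (X k i).@[v] = 0.
Definition Cond2 := forall f, in_minor_ideal X f -> in_Qideal Q f.
Definition Cond3 := exists c : 'I_r -> {mpoly R[n]},
  (exists i, ~ in_Qideal Q (c i)) /\
  exists y : 'I_w -> {mpoly R[n]}, forall k : 'I_w, \sum_(i < r) c i * X k i = Q * y k.

Lemma det_eval m (M : 'M[{mpoly R[n]}]_m) v : (\det M).@[v] = \det (map_mx (meval v) M).
Proof. by rewrite (det_map_mx (meval v)). Qed.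

Lemma idealD a b : in_Qideal Q a -> in_Qideal Q b -> in_Qideal Q (a + b).
Proof. by move=> [g ->] [h ->]; exists (g + h); rewrite mulrDr. Qed.
Lemma idealM a b : in_Qideal Q b -> in_Qideal Q (a * b).
Proof. by move=> [h ->]; exists (a * h); rewrite mulrCA. Qed.
Lemma ideal0 : in_Qideal Q 0.
Proof. by exists 0; rewrite mulr0. Qed.

Lemma minor_sum :
  (forall s, in_Qideal Q (\det (rowsub s X))) -> Cond2.
Proof.
move=> H f [a ->]; apply: (big_ind (in_Qideal Q)); [exact: ideal0|exact: idealD|].
by move=> s _; apply: idealM.
Qed.

Lemma c1c2 : Cond1 -> Cond2.
Proof.
move=> H1; apply: minor_sum => s.
apply: (proj1 hGF) => v /H1 [c [[i ci] hc]].
rewrite det_eval -det_tr; apply/eqP/det0P.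
exists (\row_j c j).
  apply: contra ci => /eqP /matrixP /(_ 0 i); rewrite !mxE => ->; by [].
apply/matrixP => a k; rewrite !mxE -[RHS](hc (s k)); apply: eq_bigr => j _.
by rewrite !mxE.
Qed.


Lemma minor1 (f : {ffun 'I_r -> 'I_w}) : injective f -> Cond2 ->
  in_Qideal Q (\det (rowsub f X)).
Proof.
move=> fi H2; apply: H2; exists (fun s => if s == f then 1 else 0).
rewrite (bigD1 f) /=; last exact/injectiveP.
rewrite eqxx mul1r big1 ?addr0 // => s /andP[_ /negbTE ->]; by rewrite mul0r.
Qed.

Lemma c2c1 : Cond2 -> Cond1.
Proof.
move=> H2 v Qv.
set Xv := map_mx (meval v) X.
case: (boolP (row_full Xv)) => rf.
  have fi : injective (fullrankfun rf) := @fullrankfun_inj _ _ _ _ rf.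
  have := fullrowsub_unit rf; rewrite unitmxE unitfE.
  have [g eg] := minor1 _ fi H2.
  have : \det (rowsub (fullrankfun rf) Xv) = 0.
    have -> : rowsub (fullrankfun rf) Xv = map_mx (meval v) (rowsub (fullrankfun rf) X).
      by apply/matrixP => a b; rewrite !mxE.
    by rewrite -det_eval eg mevalM Qv mul0r.
  by move=> ->; rewrite eqxx.
have rk : (0 < \rank (kermx Xv^T))%N.
  rewrite mxrank_ker mxrank_tr subn_gt0 ltn_neqAle rank_leq_col andbT.
  exact: rf.
have hk : kermx Xv^T != 0 by rewrite -mxrank_eq0 -lt0n.
have [i [j hij]] : exists i j, kermx Xv^T i j != 0.
  apply: NNPP => hne; move/negP: hk; apply; apply/eqP/matrixP => i j; rewrite [RHS]mxE.
  apply/eqP/negPn/negP => h; apply: hne; exists i, j; exact: h.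
exists (fun a => kermx Xv^T i a); split; first by exists j.
move=> k; have := congr1 (fun M : 'M[R]_(r, w) => M i k) (mulmx_ker Xv^T); rewrite !mxE => e.
by rewrite -[RHS]e; apply: eq_bigr => a _; rewrite !mxE.
Qed.


Lemma c3c2 : Cond3 -> Cond2.
Proof.
move=> [c [[i0 ci0] [y hy]]]; apply: minor_sum => s.
set M := rowsub s X.
apply: (proj2 hGF (c i0)) => //.
set cv := \col_i c i.
have hM : M *m cv = Q *: \col_a y (s a).
  apply/matrixP => a b; rewrite !mxE -hy; apply: eq_bigr => i _.
  by rewrite !mxE mulrC.
have := congr1 (fun N : 'M_(r, 1) => N i0 0) (mulmxA (\adj M) M cv).
rewrite hM mul_adj_mx mul_scalar_mx -scalemxAr !mxE => e.
exists (\sum_j \adj M i0 j * (\col_a y (s a)) j 0).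
by rewrite mulrC e.
Qed.


Definition Pk k := forall (f : 'I_k -> 'I_w) (g : 'I_k -> 'I_r),
  in_Qideal Q (\det (mxsub f g X)).

Lemma Pr : Cond2 -> Pk r.
Proof.
move=> H2 f g.
case: (boolP (injectiveb f)) => [/injectiveP fi|/injectivePn [x [y xy exy]]]; last first.
  rewrite (determinant_alternate xy) ?mulr0; first exact: ideal0.
  by move=> j; rewrite !mxE exy.
case: (boolP (injectiveb g)) => [/injectiveP gi|/injectivePn [x [y xy exy]]]; last first.
  rewrite -det_tr (determinant_alternate xy) ?mulr0; first exact: ideal0.
  by move=> j; rewrite !mxE exy.
have ffi : injective (finfun f) by move=> a b; rewrite !ffunE => /fi.
have [h eh] := minor1 _ ffi H2.
have -> : mxsub f g X = col_perm (perm gi) (rowsub (finfun f) X).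
  apply/matrixP => a b; rewrite !mxE ffunE; congr (X _ _).
  by rewrite permE.
rewrite col_permE det_mulmx eh mulrC; apply: idealM; by exists h.
Qed.

Lemma P0 : ~ Pk 0.
Proof.
move=> H.
have [h eh] := H (fun i => False_rect _ (notF (ltn_ord i))) (fun i => False_rect _ (notF (ltn_ord i))).
move: eh; rewrite det_mx00 => /(congr1 (meval (fun _ => 0))).
by rewrite meval1 mevalM Q0 mul0r => /eqP; rewrite oner_eq0.
Qed.

Lemma find_k (P : nat -> Prop) m : ~ P 0 -> P m -> exists k, (k < m)%N /\ ~ P k /\ P k.+1.
Proof.
move=> P0' ; elim: m => [//|m IH] Pm.
case: (classic (P m)) => [/IH [k [km hk]]|npm]; first by exists k; split => //; apply: ltnW.
by exists m.
Qed.


Lemma c2c3 : Cond2 -> Cond3.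
Proof.
move=> H2.
have [k [km [nPk Pk1]]] := @find_k Pk r P0 (Pr H2).
have [f [g ng]] : exists (f : 'I_k -> 'I_w) (g : 'I_k -> 'I_r), ~ in_Qideal Q (\det (mxsub f g X)).
  apply NNPP => hn; apply: nPk => f g; apply NNPP => h; apply: hn; exists f, g; exact: h.
have [j0 hj0] : exists j0, forall t, g t != j0.
  set S := [set g t | t in 'I_k].
  case: (pickP (fun j => j \notin S)) => [j0 hj|hall].
    exists j0 => t; apply: contraNneq hj => <-; exact: imset_f.
  have : (#|[set: 'I_r]| <= #|S|)%N.
    apply: subset_leq_card; apply/subsetP => j _.
    by have := hall j; rewrite /= => /negbFE.
  rewrite cardsT card_ord => /leq_trans /(_ (leq_imset_card _ _)).
  by rewrite card_ord leqNgt km.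
pose g' : 'I_k.+1 -> 'I_r := fun t => if unlift ord0 t is Some t' then g t' else j0.
pose f' (i : 'I_w) : 'I_k.+1 -> 'I_w :=
  fun t => if unlift ord0 t is Some t' then f t' else i.
pose C (t : 'I_k.+1) : {mpoly R[n]} :=
  (-1) ^+ (@ord0 k + t)%N * \det (\matrix_(a < k, b < k) X (f a) (g' (lift t b))).
have hcof i t : cofactor (mxsub (f' i) g' X) ord0 t = C t.
  rewrite /cofactor /C; congr (_ * \det _); apply/matrixP => a b.
  by rewrite !mxE /f' liftK.
pose c j := \sum_(t | g' t == j) C t.
exists c; split.
  exists j0; rewrite /c (big_pred1 ord0).
    rewrite /C expr0 mul1r.
    have -> : (\matrix_(a < k, b < k) X (f a) (g' (lift ord0 b))) = mxsub f g X.
      by apply/matrixP => a b; rewrite !mxE /g' liftK.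
    exact: ng.
  move=> t; case: (unliftP ord0 t) => [t' ->|->]; rewrite /g'.
    by rewrite liftK (negbTE (hj0 t')) /= eq_sym (negbTE (neq_lift _ _)).
  by rewrite unlift_none !eqxx.
have hy : forall i, exists yi, \sum_j c j * X i j = Q * yi.
  move=> i; have [yi e] := Pk1 (f' i) g'; exists yi; rewrite -e (expand_det_row _ ord0).
  under [RHS]eq_bigr do rewrite hcof mxE /f' unlift_none.
  rewrite (partition_big g' predT) //=; apply: eq_bigr => j _.
  rewrite /c big_distrl /=; apply: eq_bigr => t /eqP <-; by rewrite mulrC.
have [y hy'] := fin_all_exists hy.
by exists y.
Qed.

End Main.

Theorem lemma3p5 (R : realType) (n p q w r : nat) (A : 'M[R]_n)
  (X : 'M[{mpoly R[n]}]_(w, r)) :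
  has_signature A p q -> (1 <= p)%N -> (1 <= q)%N -> (3 <= p + q)%N ->
  (r <= w)%N ->
  let Q := Qpoly A in
  [/\ ((forall v : 'I_n -> R, Q.@[v] = 0 ->
          exists c : 'I_r -> R, (exists i, c i != 0) /\
            forall k : 'I_w, \sum_(i < r) c i * (X k i).@[v] = 0)
       <-> (forall f, in_minor_ideal X f -> in_Qideal Q f)),
      ((forall f, in_minor_ideal X f -> in_Qideal Q f)
       <-> (exists c : 'I_r -> {mpoly R[n]},
              (exists i, ~ in_Qideal Q (c i)) /\
              exists y : 'I_w -> {mpoly R[n]},
                forall k : 'I_w, \sum_(i < r) c i * X k i = Q * y k))
    & ((forall v : 'I_n -> R, Q.@[v] = 0 ->
          exists c : 'I_r -> R, (exists i, c i != 0) /\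
            forall k : 'I_w, \sum_(i < r) c i * (X k i).@[v] = 0)
       <-> (exists c : 'I_r -> {mpoly R[n]},
              (exists i, ~ in_Qideal Q (c i)) /\
              exists y : 'I_w -> {mpoly R[n]},
                forall k : 'I_w, \sum_(i < r) c i * X k i = Q * y k))].
Proof.
move=> hs p1 q1 n3 _ Q.
have hGF : GF R n Q := @geomA R n A p q hs p1 q1 n3.
have Q0 : Q.@[fun _ => 0] = 0.
  rewrite /Q Qpoly_eval /quad big1 // => i _; rewrite big1 // => j _.
  by rewrite /= mul0r mulr0.
have h12 := @c1c2 R n w r X Q hGF.
have h21 := @c2c1 R n w r X Q.
have h23 := @c2c3 R n w r X Q Q0.
have h32 := @c3c2 R n w r X Q hGF.
split; split.
- exact: h12.
- exact: h21.
- exact: h23.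
- exact: h32.
- by move=> H; apply: h23; apply: h12.
- by move=> H; apply: h21; apply: h32.
Qed.
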